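(* Let $(M,\Delta,S,\varepsilon)$ be a weak Kac algebra, $e=\Delta(1)$, and let $\theta(x)=\mathrm{Tr}(L_x)$ for $x\in M$, where $L_x:M\to M$, $L_x(y)=xy$, and $\mathrm{Tr}$ is the usual trace of a linear operator on $M$. Then for all $x\in M$, $$(\theta\otimes\mathrm{id})(\Delta(x))=(\theta\otimes S)(e(x\otimes 1))=(\theta\otimes\varepsilon_s\circ S)(\Delta(x)).$$
   Context: All algebras are finite-dimensional over $\mathbb{C}$; $\varsigma$ denotes the flip and $\mu(x\otimes y)=xy$. A weak Kac algebra is a quadruple $(M,\Delta,S,\varepsilon)$ where $M$ is a finite-dimensional $C^*$-algebra; $\Delta:M\to M\otimes M$ is an injective, not necessarily unital, $*$-homomorphism with $(\Delta\otimes\mathrm{id})\Delta=(\mathrm{id}\otimes\Delta)\Delta$; $S:M\to M$ is a linear, unital, antimultiplicative, $*$-preserving bijection with $S^2=\mathrm{id}$ and $(S\otimes S)\circ\Delta=\varsigma\circ\Delta\circ S$; and $\varepsilon:M\to\mathbb{C}$ is linear with $(\varepsilon\otimes\mathrm{id})\Delta=(\mathrm{id}\otimes\varepsilon)\Delta=\mathrm{id}$, $\varepsilon\circ S=\varepsilon$, $\varepsilon(x^* )=\overline{\varepsilon(x)}$, $(\varepsilon\otimes\varepsilon)((x\otimes1)e(1\otimes y))=\varepsilon(xy)$ for all $x,y$, where $e:=\Delta(1)$, and $(\varepsilon_s\otimes\mathrm{id})\Delta(x)=(1\otimes x)e$ for all $x$, where $\varepsilon_s:=\mu(S\otimes\mathrm{id})\Delta$.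 *)

(* Defs.v *)
(* Weak Kac algebras, with M ⊗ M modelled in coordinates
   with respect to the canonical basis  vbasis {:M}  of M. *)
From HB Require Import structures.
From mathcomp Require Import all_boot all_order all_algebra all_field.
From mathcomp Require Import complex.
From mathcomp Require Import reals.
Set Implicit Arguments. Unset Strict Implicit. Unset Printing Implicit Defensive.
Import Order.TTheory GRing.Theory Num.Theory.
Local Open Scope ring_scope.

Section WeakKac.
Variables (R : realType) (M : falgType R[i]).
Local Notation C := R[i].

Definition wk_dim : nat := \dim {:M}.
Definition wk_b : wk_dim.-tuple M := vbasis {:M}.
Local Notation d := wk_dim.
Local Notation b := wk_b.
Local Notation bb i := (tnth wk_b i).

(* M ⊗ M  :=  d x d coefficient matrices:  T  <->  \sum_(i,j) T i j (b_i ⊗ b_j)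
   M ⊗ M ⊗ M := functions on 'I_d^3 (coefficients on b_i ⊗ b_j ⊗ b_k). *)
Definition tens2 := 'M[C]_(d, d).
Definition tens3 := 'I_d -> 'I_d -> 'I_d -> C.

Definition tens (x y : M) : tens2 :=
  \matrix_(i < d, j < d) (coord b i x * coord b j y).

Definition map2 (f g : M -> M) (T : tens2) : tens2 :=
  \sum_(i < d) \sum_(j < d) T i j *: tens (f (bb i)) (g (bb j)).

Definition flip2 (T : tens2) : tens2 := T^T.

Definition mul2 (T U : tens2) : tens2 :=
  \sum_(i < d) \sum_(j < d) \sum_(k < d) \sum_(l < d)
     (T i j * U k l) *: tens (bb i * bb k) (bb j * bb l).

Definition star2 (star : M -> M) (T : tens2) : tens2 :=
  \sum_(i < d) \sum_(j < d) conjc (T i j) *: tens (star (bb i)) (star (bb j)).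

Definition mu (T : tens2) : M := \sum_(i < d) \sum_(j < d) T i j *: (bb i * bb j).

(* φ ⊗ ψ : M ⊗ M -> M  (≅ C ⊗ M) for φ : M -> C, ψ : M -> M *)
Definition app_l (phi : M -> C) (psi : M -> M) (T : tens2) : M :=
  \sum_(i < d) \sum_(j < d) (T i j * phi (bb i)) *: psi (bb j).

(* ψ ⊗ φ : M ⊗ M -> M  (≅ M ⊗ C) *)
Definition app_r (psi : M -> M) (phi : M -> C) (T : tens2) : M :=
  \sum_(i < d) \sum_(j < d) (T i j * phi (bb j)) *: psi (bb i).

Definition app_cc (phi psi : M -> C) (T : tens2) : C :=
  \sum_(i < d) \sum_(j < d) T i j * phi (bb i) * psi (bb j).

Definition DeltaL (Delta : M -> tens2) (T : tens2) : tens3 :=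
  fun i j k => \sum_(p < d) T p k * Delta (bb p) i j.
Definition DeltaR (Delta : M -> tens2) (T : tens2) : tens3 :=
  fun i j k => \sum_(p < d) T i p * Delta (bb p) j k.

Definition eps_s (Delta : M -> tens2) (S : M -> M) (x : M) : M :=
  mu (map2 S id (Delta x)).

Definition theta (x : M) : C := \sum_(i < d) coord b i (x * bb i).

(* finite-dimensional C*-algebra: a *-algebra with a C*-norm
   (completeness is automatic in finite dimension) *)
Definition is_cstar_algebra (star : M -> M) : Prop :=
  [/\ (forall (a : C) (x y : M), star (a *: x + y) = conjc a *: star x + star y),
      (forall x, star (star x) = x),
      (forall x y, star (x * y) = star y * star x) &
      exists N : M -> R,
        [/\ forall x, N x = 0 -> x = 0,
            forall x y, N (x + y) <= N x + N y,
            forall (a : C) x, N (a *: x) = ComplexField.Normc.normc a * N x,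
            forall x y, N (x * y) <= N x * N y &
            forall x, N (star x * x) = N x ^+ 2]].

Definition weak_kac (star : M -> M) (Delta : M -> tens2) (S : M -> M)
    (eps : M -> C) : Prop :=
  [/\ is_cstar_algebra star,
      (* Δ : injective, not necessarily unital *-homomorphism, coassociative *)
      [/\ forall (a : C) x y, Delta (a *: x + y) = a *: Delta x + Delta y,
          forall x y, Delta (x * y) = mul2 (Delta x) (Delta y),
          forall x, Delta (star x) = star2 star (Delta x),
          injective Delta &
          forall x, DeltaL Delta (Delta x) = DeltaR Delta (Delta x)],
      [/\ forall (a : C) x y, S (a *: x + y) = a *: S x + S y,
          S 1 = 1,
          forall x y, S (x * y) = S y * S x,
          forall x, S (star x) = star (S x) &
          [/\ bijective S,
               forall x, S (S x) = x &
          forall x, map2 S S (Delta x) = flip2 (Delta (S x))]] &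
      [/\ forall (a : C) x y, eps (a *: x + y) = a * eps x + eps y,
          forall x, app_l eps id (Delta x) = x,
          forall x, app_r id eps (Delta x) = x &
          [/\ forall x, eps (S x) = eps x,
               forall x, eps (star x) = conjc (eps x),
          forall x y, app_cc eps eps
                        (mul2 (mul2 (tens x 1) (Delta 1)) (tens 1 y)) = eps (x * y) &
          forall x, map2 (eps_s Delta S) id (Delta x) = mul2 (tens 1 x) (Delta 1)]]].

End WeakKac.

(* Main.v *)
Require Import Defs.
From HB Require Import structures.
From mathcomp Require Import all_boot all_order all_algebra all_field.
From mathcomp Require Import complex.
From mathcomp Require Import reals.
Local Open Scope ring_scope.
Set Implicit Arguments. Unset Strict Implicit. Unset Printing Implicit Defensive.
Import Order.TTheory GRing.Theory Num.Theory.
Section Base.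
Variables (R : realType) (M : falgType R[i]).
Local Notation C := R[i].
Local Notation d := (wk_dim M).
Local Notation b := (wk_b M).
Local Notation bb i := (tnth (wk_b M) i).
Local Notation T2 := (tens2 M).

Definition lin (V W : lmodType C) (f : V -> W) :=
  forall k x y, f (k *: x + y) = k *: f x + f y.

Lemma lin0 (V W : lmodType C) (f : V -> W) : lin f -> f 0 = 0.
Proof.
move=> h; have := h 1 0 0; rewrite !scale1r addr0.
move=> e; apply: (@addrI _ (f 0)); by rewrite addr0 -e.
Qed.

Lemma linD (V W : lmodType C) (f : V -> W) : lin f -> forall x y, f (x + y) = f x + f y.
Proof. by move=> h x y; have := h 1 x y; rewrite !scale1r. Qed.

Lemma linZ (V W : lmodType C) (f : V -> W) : lin f -> forall k x, f (k *: x) = k *: f x.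
Proof. by move=> h k x; rewrite -(addr0 (k *: x)) h (lin0 h) addr0. Qed.

Lemma lin_sum (V W : lmodType C) (f : V -> W) (I : Type) (r : seq I) (P : pred I) F :
  lin f -> f (\sum_(i <- r | P i) F i) = \sum_(i <- r | P i) f (F i).
Proof.
move=> h; elim/big_rec2: _ => [|i y1 y2 _ <-]; first exact: lin0.
by rewrite (linD h).
Qed.

Lemma bfree : free b.
Proof. by have /andP[] := vbasisP (fullv : {vspace M}). Qed.

Lemma coord_bb (i j : 'I_d) : coord b j (bb i) = (i == j)%:R.
Proof. by rewrite (tnth_nth 0) coord_free // bfree. Qed.

Lemma expand (x : M) : x = \sum_i coord b i x *: bb i.
Proof.
rewrite {1}(coord_vbasis (memvf x)); apply: eq_bigr => i _.
by rewrite (tnth_nth 0).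
Qed.

Lemma sum_delta (V : lmodType C) (F : 'I_d -> V) k :
  \sum_i ((i == k)%:R : C) *: F i = F k.
Proof.
rewrite (bigD1 k) //= eqxx scale1r big1 ?addr0 // => i /negbTE ->.
by rewrite scale0r.
Qed.

Lemma sum_delta' (V : lmodType C) (F : 'I_d -> V) k :
  \sum_i ((k == i)%:R : C) *: F i = F k.
Proof. by rewrite -(sum_delta F k); apply: eq_bigr => i _; rewrite eq_sym. Qed.

Lemma sum_deltaC (F : 'I_d -> C) k :
  \sum_i ((i == k)%:R : C) * F i = F k.
Proof. exact: (sum_delta F k). Qed.

Lemma lin_expand (V : lmodType C) (f : M -> V) x :
  lin f -> f x = \sum_i coord b i x *: f (bb i).
Proof.
move=> h; rewrite {1}(expand x) (lin_sum _ _ _ h); apply: eq_bigr => i _.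
by rewrite (linZ h).
Qed.

Lemma coord_lin (k : 'I_d) : lin (coord b k : M -> C).
Proof. by move=> a x y; rewrite linearP. Qed.

Definition E (V : lmodType C) (beta : M -> M -> V) (T : T2) : V :=
  \sum_i \sum_j T i j *: beta (bb i) (bb j).

Definition bil (V : lmodType C) (beta : M -> M -> V) :=
  (forall c, lin (beta ^~ c)) /\ (forall a, lin (beta a)).

Lemma E_lin (V : lmodType C) (beta : M -> M -> V) : lin (E beta).
Proof.
move=> k T U; rewrite /E scaler_sumr -big_split; apply: eq_bigr => i _.
rewrite scaler_sumr -big_split; apply: eq_bigr => j _.
by rewrite !mxE scalerDl scalerA.
Qed.

Lemma E_ext (V : lmodType C) (beta beta' : M -> M -> V) T :
  (forall i j, beta (bb i) (bb j) = beta' (bb i) (bb j)) -> E beta T = E beta' T.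
Proof.
by move=> h; apply: eq_bigr => i _; apply: eq_bigr => j _; rewrite h.
Qed.

Lemma E_E (V : lmodType C) (beta : M -> M -> V) (gamma : M -> M -> T2) T :
  E beta (E gamma T) = E (fun a c => E beta (gamma a c)) T.
Proof.
rewrite [X in E beta X]/E [RHS]/E (lin_sum _ _ _ (E_lin beta)); apply: eq_bigr => i _.
rewrite (lin_sum _ _ _ (E_lin beta)); apply: eq_bigr => j _.
by rewrite (linZ (E_lin beta)).
Qed.

Lemma E_tens (V : lmodType C) (beta : M -> M -> V) x y :
  bil beta -> E beta (tens x y) = beta x y.
Proof.
case=> h1 h2; rewrite (lin_expand _ (h1 y)); apply: eq_bigr => i _.
rewrite (lin_expand _ (h2 (bb i))) scaler_sumr; apply: eq_bigr => j _.
by rewrite mxE scalerA.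
Qed.

Lemma E_tensb (V : lmodType C) (beta : M -> M -> V) i j :
  E beta (tens (bb i) (bb j)) = beta (bb i) (bb j).
Proof.
rewrite /E (bigD1 i) //= [X in _ + X]big1 => [|k /negbTE ki]; last first.
  by apply: big1 => l _; rewrite mxE !coord_bb (eq_sym i k) ki mul0r scale0r.
rewrite addr0 (bigD1 j) //= [X in _ + X]big1 => [|l /negbTE lj].
  by rewrite mxE !coord_bb !eqxx mulr1 scale1r addr0.
by rewrite mxE !coord_bb (eq_sym j l) lj mulr0 scale0r.
Qed.

Lemma recon (T : T2) : E (@tens _ _) T = T.
Proof.
apply/matrixP => k l; rewrite /E summxE.
under eq_bigr do rewrite summxE.
under eq_bigr do under eq_bigr do rewrite !mxE !coord_bb mulrCA (mulrC (T _ _)).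
under eq_bigr do rewrite -mulr_sumr (sum_deltaC (fun j => T _ j) l).
exact: sum_deltaC.
Qed.

Lemma tens_lin1 (y : M) : lin (fun x : M => tens x y).
Proof. by move=> k x z; apply/matrixP => i j; rewrite !mxE linearP /= mulrDl mulrA. Qed.
Lemma tens_lin2 (x : M) : lin (fun y : M => tens x y).
Proof. by move=> k y z; apply/matrixP => i j; rewrite !mxE linearP /= mulrDr mulrCA. Qed.
Lemma tens_bil : bil (@tens _ M).
Proof. by split; [exact: tens_lin1|exact: tens_lin2]. Qed.

End Base.
Section Ops.
Variables (R : realType) (M : falgType R[i]).
Local Notation C := R[i].
Local Notation d := (wk_dim M).
Local Notation b := (wk_b M).
Local Notation bb i := (tnth (wk_b M) i).
Local Notation T2 := (tens2 M).

Lemma lin_id (V : lmodType C) : lin (fun x : V => x).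
Proof. by []. Qed.

Lemma lin_comp (U V W : lmodType C) (f : V -> W) (g : U -> V) :
  lin f -> lin g -> lin (fun x => f (g x)).
Proof. by move=> hf hg k x y; rewrite hg hf. Qed.

Lemma lin_mull (y : M) : lin (fun x : M => x * y).
Proof. by move=> k x z; rewrite mulrDl scalerAl. Qed.
Lemma lin_mulr (y : M) : lin (fun x : M => y * x).
Proof. by move=> k x z; rewrite mulrDr scalerAr. Qed.

Lemma lin_scale_r (V : lmodType C) (phi : M -> C) (v : V) : lin phi -> lin (fun x => phi x *: v).
Proof. by move=> h k x y; rewrite h scalerDl scalerA. Qed.
Lemma lin_scale_l (V : lmodType C) (f : M -> V) (s : C) : lin f -> lin (fun x => s *: f x).
Proof. by move=> h k x y; rewrite h scalerDr !scalerA mulrC. Qed.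

Lemma lin_E (V W : lmodType C) (f : V -> W) (beta : M -> M -> V) (T : T2) :
  lin f -> f (E beta T) = E (fun a c => f (beta a c)) T.
Proof.
move=> h; rewrite /E (lin_sum _ _ _ h); apply: eq_bigr => i _.
rewrite (lin_sum _ _ _ h); apply: eq_bigr => j _; exact: linZ.
Qed.

Lemma E_sum (V : lmodType C) (I : Type) (r : seq I) (beta : I -> M -> M -> V) (T : T2) :
  E (fun a c => \sum_(q <- r) beta q a c) T = \sum_(q <- r) E (beta q) T.
Proof.
rewrite /E; under eq_bigr do under eq_bigr do rewrite scaler_sumr.
under eq_bigr do rewrite exchange_big.
by rewrite exchange_big.
Qed.

Lemma E_linb (V W : lmodType C) (beta : W -> M -> M -> V) (T : T2) :
  (forall a c, lin (fun w => beta w a c)) -> lin (fun w => E (beta w) T).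
Proof.
move=> h k x y; rewrite /E scaler_sumr -big_split; apply: eq_bigr => i _.
rewrite scaler_sumr -big_split; apply: eq_bigr => j _.
by rewrite h scalerDr !scalerA mulrC.
Qed.

Lemma map2_E (f g : M -> M) (T : T2) : map2 f g T = E (fun a c => tens (f a) (g c)) T.
Proof. by []. Qed.

Lemma mu_E (T : T2) : mu T = E (fun a c : M => a * c) T.
Proof. by []. Qed.

Lemma app_l_E (phi : M -> C) (psi : M -> M) (T : T2) :
  app_l phi psi T = E (fun a c => phi a *: psi c) T.
Proof.
by apply: eq_bigr => i _; apply: eq_bigr => j _; rewrite scalerA.
Qed.

Lemma mul2_E (T U : T2) :
  mul2 T U = E (fun a c : M => E (fun a' c' => tens (a * a') (c * c')) U) T.
Proof.
apply: eq_bigr => i _; apply: eq_bigr => j _; rewrite /E scaler_sumr.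
apply: eq_bigr => k _; rewrite scaler_sumr; apply: eq_bigr => l _.
by rewrite scalerA.
Qed.

Lemma entry_lin (p q : 'I_d) : lin (fun T : T2 => T p q).
Proof. by move=> k T U; rewrite !mxE. Qed.

Lemma flip_E (T : T2) : flip2 T = E (fun a c : M => tens c a) T.
Proof.
rewrite -{1}(recon T) /flip2; apply/matrixP => p q.
rewrite mxE (lin_E _ _ (entry_lin q p)) (lin_E _ _ (entry_lin p q)).
by apply: E_ext => i j; rewrite !mxE mulrC.
Qed.

Lemma E_map2 (V : lmodType C) (beta : M -> M -> V) (f g : M -> M) (T : T2) :
  bil beta -> E beta (map2 f g T) = E (fun a c => beta (f a) (g c)) T.
Proof. by move=> hb; rewrite map2_E E_E; apply: E_ext => i j; rewrite E_tens. Qed.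

Lemma E_flip (V : lmodType C) (beta : M -> M -> V) (T : T2) :
  bil beta -> E beta (flip2 T) = E (fun a c => beta c a) T.
Proof. by move=> hb; rewrite flip_E E_E; apply: E_ext => i j; rewrite E_tens. Qed.

Lemma bil_mul (V : lmodType C) (beta : M -> M -> V) (U : T2) :
  bil beta -> bil (fun a c => E (fun a' c' => beta (a * a') (c * c')) U).
Proof.
case=> h1 h2; split=> [c|a].
  apply: E_linb => a' c'; exact: (lin_comp (h1 _) (lin_mull _)).
apply: E_linb => a' c'; exact: (lin_comp (h2 _) (lin_mull _)).
Qed.

Lemma E_mul2 (V : lmodType C) (beta : M -> M -> V) (T U : T2) :
  bil beta -> E beta (mul2 T U) =
    E (fun a c => E (fun a' c' => beta (a * a') (c * c')) U) T.
Proof.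
move=> hb; rewrite mul2_E E_E; apply: E_ext => i j; rewrite E_E.
by apply: E_ext => k l; rewrite E_tens.
Qed.

Lemma bil_tens (f g : M -> M) : lin f -> lin g -> bil (fun a c => tens (f a) (g c)).
Proof.
move=> hf hg; split=> [c|a].
  exact: (lin_comp (tens_lin1 _) hf).
exact: (lin_comp (tens_lin2 _) hg).
Qed.

Lemma bil_tensC (f g : M -> M) : lin f -> lin g -> bil (fun a c => tens (f c) (g a)).
Proof.
move=> hf hg; split=> [c|a].
  exact: (lin_comp (tens_lin2 _) hg).
exact: (lin_comp (tens_lin1 _) hf).
Qed.

Lemma bil_mulM (f g : M -> M) : lin f -> lin g -> bil (fun a c => f a * g c).
Proof.
move=> hf hg; split=> [c|a].
  exact: (lin_comp (lin_mull _) hf).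
exact: (lin_comp (lin_mulr _) hg).
Qed.

Lemma bil_scale (V : lmodType C) (phi : M -> C) (f : M -> V) :
  lin phi -> lin f -> bil (fun a c => phi a *: f c).
Proof.
move=> hp hf; split=> [c|a]; first exact: lin_scale_r.
exact: lin_scale_l.
Qed.

Lemma bil_scaleC (V : lmodType C) (phi : M -> C) (f : M -> V) :
  lin phi -> lin f -> bil (fun a c => phi c *: f a).
Proof.
move=> hp hf; split=> [c|a]; first exact: lin_scale_l.
exact: lin_scale_r.
Qed.

Lemma mul2A (T U W : T2) : mul2 (mul2 T U) W = mul2 T (mul2 U W).
Proof.
rewrite [LHS]mul2_E E_mul2; last by apply: bil_mul; apply: bil_tens.
rewrite [RHS]mul2_E; apply: E_ext => i j.
rewrite mul2_E E_E; apply: E_ext => k l; rewrite E_E; apply: E_ext => p q.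
by rewrite E_tens ?mulrA //; apply: bil_tens; apply: lin_mulr.
Qed.

Lemma theta_lin : lin (@theta R M).
Proof.
move=> k x y; rewrite /theta scaler_sumr -big_split; apply: eq_bigr => i _.
by rewrite mulrDl -scalerAl linearP.
Qed.

Lemma thetaC (x y : M) : theta (x * y) = theta (y * x).
Proof.
rewrite /theta.
have ex : forall (u v : M) i, coord b i (u * (v * bb i)) =
    \sum_j coord b j (v * bb i) * coord b i (u * bb j).
  move=> u v i; rewrite {1}(expand (v * bb i)) mulr_sumr linear_sum.
  by apply: eq_bigr => j _; rewrite -scalerAr linearZ.
under eq_bigr do rewrite -mulrA ex.
under [RHS]eq_bigr do rewrite -mulrA ex.
rewrite exchange_big; apply: eq_bigr => i _; apply: eq_bigr => j _.
by rewrite mulrC.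
Qed.

Lemma trace_cyc (K : M -> T2) (Psi : M -> M -> M) :
  lin K ->
  \sum_i coord b i (E Psi (K (bb i))) = \sum_p \sum_q K (Psi (bb p) (bb q)) p q.
Proof.
move=> hK.
under eq_bigr do rewrite (lin_E _ _ (coord_lin _)).
under [RHS]eq_bigr do under eq_bigr do
  rewrite (lin_expand _ (lin_comp (entry_lin _ _) hK)).
rewrite /E exchange_big; apply: eq_bigr => p _.
rewrite exchange_big; apply: eq_bigr => q _.
apply: eq_bigr => i _; exact: mulrC.
Qed.

End Ops.

Section Ops2.
Variables (R : realType) (M : falgType R[i]).
Local Notation C := R[i].
Local Notation T2 := (tens2 M).

Lemma bil_mulMC (f g : M -> M) : lin f -> lin g -> bil (fun a c => f c * g a).
Proof.
move=> hf hg; split=> [c|a].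
  exact: (lin_comp (lin_mulr _) hg).
exact: (lin_comp (lin_mull _) hf).
Qed.

Lemma mul2_lin (T : T2) : lin (mul2 T).
Proof.
move=> k U W; rewrite !mul2_E.
have := @E_linb R M _ _ (fun (U : T2) a c => E (fun a' c' => tens (a * a') (c * c')) U) T.
by apply=> a c; apply: E_lin.
Qed.

Lemma lin_mulC (s : C) : lin (fun t : C => s * t).
Proof. by move=> k x y; rewrite mulrDr mulrCA. Qed.

End Ops2.
Section Coas.
Variables (R : realType) (M : falgType R[i]).
Local Notation C := R[i].
Local Notation d := (wk_dim M).
Local Notation b := (wk_b M).
Local Notation bb i := (tnth (wk_b M) i).
Local Notation T2 := (tens2 M).

Lemma coasL (D : M -> T2) (V : lmodType C) (gamma : M -> M -> M -> V) (T : T2) :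
  E (fun a c => E (fun a1 a2 => gamma a1 a2 c) (D a)) T =
  \sum_i \sum_j \sum_k DeltaL D T i j k *: gamma (bb i) (bb j) (bb k).
Proof.
rewrite /E /DeltaL.
under eq_bigr do under eq_bigr do rewrite scaler_sumr.
under eq_bigr do under eq_bigr do under eq_bigr do rewrite scaler_sumr.
under eq_bigr do under eq_bigr do under eq_bigr do under eq_bigr do rewrite scalerA.
under [RHS]eq_bigr do under eq_bigr do under eq_bigr do rewrite scaler_suml.
under eq_bigr do rewrite exchange_big.
under eq_bigr do under eq_bigr do rewrite exchange_big.
rewrite exchange_big.
under eq_bigr do rewrite exchange_big.
by under eq_bigr do under eq_bigr do rewrite exchange_big.
Qed.

Lemma coasR (D : M -> T2) (V : lmodType C) (gamma : M -> M -> M -> V) (T : T2) :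
  E (fun a c => E (fun c1 c2 => gamma a c1 c2) (D c)) T =
  \sum_i \sum_j \sum_k DeltaR D T i j k *: gamma (bb i) (bb j) (bb k).
Proof.
rewrite /E /DeltaR.
under eq_bigr do under eq_bigr do rewrite scaler_sumr.
under eq_bigr do under eq_bigr do under eq_bigr do rewrite scaler_sumr.
under eq_bigr do under eq_bigr do under eq_bigr do under eq_bigr do rewrite scalerA.
under [RHS]eq_bigr do under eq_bigr do under eq_bigr do rewrite scaler_suml.
under eq_bigr do rewrite exchange_big.
by under eq_bigr do under eq_bigr do rewrite exchange_big.
Qed.

Lemma coasE (D : M -> T2) (V : lmodType C) (gamma : M -> M -> M -> V) (T : T2) :
  DeltaL D T = DeltaR D T ->
  E (fun a c => E (fun a1 a2 => gamma a1 a2 c) (D a)) T =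
  E (fun a c => E (fun c1 c2 => gamma a c1 c2) (D c)) T.
Proof. by move=> h; rewrite coasL coasR h. Qed.

End Coas.
Section Kac.
Variables (R : realType) (M : falgType R[i]).
Local Notation C := R[i].
Local Notation d := (wk_dim M).
Local Notation b := (wk_b M).
Local Notation bb i := (tnth (wk_b M) i).
Local Notation T2 := (tens2 M).
Variables (D : M -> T2) (S : M -> M).
Hypothesis HDlin : lin D.
Hypothesis HDmul : forall x y, D (x * y) = mul2 (D x) (D y).
Hypothesis Hcoas : forall x, DeltaL D (D x) = DeltaR D (D x).
Hypothesis HSlin : lin S.
Hypothesis HS1 : S 1 = 1.
Hypothesis HSanti : forall x y, S (x * y) = S y * S x.
Hypothesis HSS : forall x, S (S x) = x.
Hypothesis HSD : forall x, map2 S S (D x) = flip2 (D (S x)).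
Hypothesis HA : forall x, map2 (eps_s D S) id (D x) = mul2 (tens 1 x) (D 1).

Definition epst (x : M) := E (fun a c => a * S c) (D x).

Lemma epss_E x : eps_s D S x = E (fun a c => S a * c) (D x).
Proof. by rewrite /eps_s mu_E E_map2 //; apply: bil_mulM. Qed.

Lemma epss_lin : lin (eps_s D S).
Proof.
move=> k x y; rewrite !epss_E.
by rewrite (HDlin k x y); apply: E_lin.
Qed.

Lemma epst_lin : lin epst.
Proof. by move=> k x y; rewrite /epst (HDlin k x y); apply: E_lin. Qed.

Lemma DS x : D (S x) = flip2 (map2 S S (D x)).
Proof. by rewrite HSD /flip2 trmxK. Qed.

Lemma epss_S v : eps_s D S (S v) = E (fun a c => c * S a) (D v).
Proof.
rewrite epss_E DS E_flip; last exact: bil_mulM.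
rewrite E_map2; last exact: bil_mulMC.
by apply: E_ext => i j; rewrite HSS.
Qed.

Lemma epss_S' v : eps_s D S (S v) = S (epst v).
Proof.
rewrite epss_S /epst (lin_E _ _ HSlin); apply: E_ext => i j.
by rewrite HSanti HSS.
Qed.

Lemma eflip : D 1 = flip2 (map2 S S (D 1)).
Proof. by rewrite -DS HS1. Qed.

Lemma key v : map2 id epst (D v) = mul2 (D 1) (tens v 1).
Proof.
have h := congr1 (E (fun a c => tens (S c) (S a))) (HA (S v)).
have bC := bil_tensC HSlin HSlin.
move: h; rewrite E_map2 // DS E_flip; last first.
  exact: (bil_tensC HSlin (lin_comp HSlin epss_lin)).
rewrite E_map2; last exact: (bil_tens HSlin (lin_comp HSlin epss_lin)).
rewrite E_mul2 // E_tens; last exact: (bil_mul _ bC).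
move=> h; rewrite map2_E.
transitivity (E (fun a' c' => tens (S (S v * c')) (S (1 * a'))) (D 1)).
  by rewrite -h; apply: E_ext => i j; rewrite HSS epss_S' HSS.
rewrite mul2_E.
transitivity (E (fun a c => tens (a * v) (c * 1)) (D 1)); last first.
  apply: E_ext => i j; rewrite E_tens //.
  apply: bil_tens; apply: lin_mulr.
rewrite [in RHS]eflip E_flip; last first.
  apply: bil_tens; apply: lin_mull.
rewrite E_map2; last by apply: bil_tensC; apply: lin_mull.
by apply: E_ext => i j; rewrite HSanti HSS mul1r mulr1.
Qed.

Lemma part2 (theta : M -> C) (x : M) : lin theta ->
  app_l theta S (mul2 (D 1) (tens x 1))
  = app_l theta (fun y => eps_s D S (S y)) (D x).
Proof.
move=> ht; rewrite !app_l_E -key E_map2; last exact: bil_scale.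
by apply: E_ext => i j; rewrite epss_S'.
Qed.

Lemma DeA x : mul2 (D x) (D 1) = D x.
Proof. by rewrite -HDmul mulr1. Qed.

Lemma key2 y : mul2 (D 1) (tens y 1) = E (fun a c => mul2 (D a) (tens 1 (S c))) (D y).
Proof.
rewrite -key map2_E.
transitivity (E (fun a c => E (fun a1 a2 => tens a1 (a2 * S c)) (D a)) (D y)); last first.
  apply: E_ext => i j; rewrite mul2_E; apply: E_ext => k l.
  rewrite E_tens ?mulr1 //; apply: bil_tens; apply: lin_mulr.
rewrite (coasE (fun a1 a2 c => tens a1 (a2 * S c)) (Hcoas y)).
by apply: E_ext => i j; rewrite /epst (lin_E _ _ (tens_lin2 _)).
Qed.

Definition Phi (phi : M -> C) (w c : M) := E (fun w1 w2 => phi (w2 * S c) *: w1) (D w).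

Lemma Tform (phi : M -> C) x y : lin phi ->
  E (fun a c => phi c *: (a * y)) (D x) = E (fun a c => Phi phi (x * a) c) (D y).
Proof.
move=> hp.
transitivity (E (fun a c => phi c *: a) (mul2 (D x) (tens y 1))).
  rewrite E_mul2; last exact: (bil_scaleC hp (lin_id (V:=M))).
  apply: E_ext => i j; rewrite E_tens ?mulr1 //.
  apply: bil_scaleC; [exact: (lin_comp hp (lin_mulr _))| exact: lin_mulr].
rewrite -DeA mul2A key2 (lin_E _ _ (mul2_lin _)) E_E.
apply: E_ext => i j; rewrite -mul2A -HDmul E_mul2; last exact: (bil_scaleC hp (lin_id (V:=M))).
apply: E_ext => k l; rewrite E_tens ?mulr1 //.
apply: bil_scaleC; [exact: (lin_comp hp (lin_mulr _))| exact: lin_mulr].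
Qed.

Lemma Phi_bil (phi : M -> C) : lin phi -> bil (Phi phi).
Proof.
move=> hp; split=> [c|a].
  by move=> s u w /=; rewrite /Phi HDlin; apply: E_lin.
have := @E_linb R M M M (fun c w1 w2 => phi (w2 * S c) *: w1) (D a).
apply=> w1 w2.
exact: (lin_scale_r _ (lin_comp hp (lin_comp (lin_mulr _) HSlin))).
Qed.

Lemma part1 (x : M) :
  app_l (@theta R M) id (D x) = app_l (@theta R M) S (mul2 (D 1) (tens x 1)).
Proof.
rewrite [LHS]expand [RHS]expand; apply: eq_bigr => k _; congr (_ *: _).
have hp := coord_lin k.
pose phi := coord b k.
pose Z := E (fun a c => theta (a * x) * phi (S c)) (D 1).
have bth : forall (f g : M -> M), lin f -> lin g ->
    bil (fun a c => coord b k (theta (f a) *: g c)).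
  move=> f g hf hg; split=> [c|a].
    move=> s u w /=.
    rewrite hf theta_lin scalerDl linearD !linearZ /=; congr (_ + _).
    exact: (etrans (esym (mulrA _ _ _)) (mulrCA _ _ _)).
  move=> s u w /=.
  by rewrite hg scalerDr linearD !linearZ /=.
transitivity Z; last first.
  symmetry; rewrite app_l_E (lin_E _ _ hp) E_mul2; last exact: (bth _ _ (lin_id (V:=M)) HSlin).
  apply: E_ext => i j; rewrite E_tens; last exact: bth (lin_mulr _) (lin_comp HSlin (lin_mulr _)).
  by rewrite mulr1 (linZ hp).
rewrite app_l_E (lin_E _ _ hp).
transitivity (\sum_i coord b i (E (fun a c => phi c *: (a * bb i)) (D x))).
  under [RHS]eq_bigr do rewrite (lin_E _ _ (coord_lin _)).
  rewrite -E_sum; apply: E_ext => i j.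
  rewrite (linZ hp) /theta scaler_suml; apply: eq_bigr => p _.
  rewrite (linZ (coord_lin p)); exact: mulrC.
under eq_bigr do rewrite (Tform x _ hp).
have Kl : lin (fun y => map2 (fun a => x * a) id (D y)).
  by move=> s u w /=; rewrite !map2_E HDlin; apply: E_lin.
transitivity (\sum_i coord b i (E (Phi phi) (map2 (fun a => x * a) id (D (bb i))))).
  by apply: eq_bigr => i _; rewrite E_map2 //; apply: Phi_bil.
rewrite (trace_cyc _ Kl).
have Kpq : forall p q : 'I_d, lin (fun w => map2 (fun a => x * a) id (D w) p q).
  by move=> p q; apply: (lin_comp (entry_lin p q) Kl).
have inner : forall p q : 'I_d, map2 (fun a => x * a) id (D (Phi phi (bb p) (bb q))) p q =
   E (fun w1 w2 => phi (w2 * S (bb q)) *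
        E (fun u v => coord b p (x * u) * coord b q v) (D w1)) (D (bb p)).
  move=> p q; rewrite /Phi.
  have := lin_E (fun w1 w2 => phi (w2 * S (bb q)) *: w1) (D (bb p)) (Kpq p q).
  move=> /= ->; apply: E_ext => i j.
  have := linZ (Kpq p q) (phi (bb j * S (bb q))) (bb i).
  move=> /= ->; congr (_ * _).
  rewrite map2_E (lin_E _ _ (entry_lin p q)); apply: E_ext => u v.
  by rewrite mxE.
under eq_bigr do under eq_bigr do rewrite inner.
have inner2 : forall p : 'I_d,
   \sum_q E (fun w1 w2 => phi (w2 * S (bb q)) *
        E (fun u v => coord b p (x * u) * coord b q v) (D w1)) (D (bb p)) =
   E (fun w1 w2 => E (fun u v => coord b p (x * u) * phi (w2 * S v)) (D w1)) (D (bb p)).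
  move=> p; rewrite -E_sum; apply: E_ext => i j.
  under eq_bigr do rewrite (lin_E _ _ (lin_mulC _)).
  rewrite -E_sum; apply: E_ext => u v.
  have := lin_expand (bb v) (lin_comp hp (lin_comp (lin_mulr (bb j)) HSlin)).
  rewrite /phi /= => ->.
  rewrite mulr_sumr; apply: eq_bigr => q _.
  rewrite mulrCA; congr (_ * _); exact: mulrC.
under eq_bigr do rewrite inner2.
under eq_bigr => p _ do rewrite (coasE (fun u v w2 => coord b p (x * u) * phi (w2 * S v)) (Hcoas (bb p))).
have inner3 : forall (p : 'I_d) (u c : M),
    E (fun v w2 => coord b p (x * u) * phi (w2 * S v)) (D c)
    = coord b p (x * u) * phi (S (epst c)).
  move=> p u c; rewrite -epss_S' epss_S.
  have := lin_E (fun a c => c * S a) (D c) (lin_comp (lin_mulC (coord b p (x * u))) hp).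
  by move=> /= ->.
have bpg : forall (p : 'I_d) (f g : M -> M), lin f -> lin g ->
    bil (fun u c => coord b p (f u) * phi (S (g c))).
  move=> p f g hf hg; split=> [c|a].
    exact: (lin_scale_r (phi (S (g c))) (lin_comp (coord_lin p) hf)).
  exact: (lin_scale_l (coord b p (f a)) (lin_comp hp (lin_comp HSlin hg))).
have bp : forall (p : 'I_d) (f : M -> M), lin f ->
    bil (fun u c => coord b p (f u) * phi (S c)).
  by move=> p f hf; apply: (bpg p f id hf (lin_id (V:=M))).
transitivity (\sum_p E (fun u c => coord b p (x * u) * phi (S c)) (mul2 (D 1) (tens (bb p) 1))).
  apply: eq_bigr => p _; rewrite -key E_map2; last exact: (bp p _ (lin_mulr x)).
  by apply: E_ext => i j; rewrite inner3.
transitivity (\sum_p E (fun a c => coord b p (x * (a * bb p)) * phi (S c)) (D 1)).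
  apply: eq_bigr => p _; rewrite E_mul2; last exact: (bp p _ (lin_mulr x)).
  apply: E_ext => i j; rewrite E_tens ?mulr1 //.
  exact: (bpg p _ _ (lin_comp (lin_mulr x) (lin_mulr _)) (lin_mulr _)).
rewrite -E_sum /Z; apply: E_ext => i j; rewrite thetaC /theta mulr_suml.
by apply: eq_bigr => p _; rewrite mulrA.
Qed.

End Kac.

Unset Implicit Arguments.

Theorem proposition2p3p3 (R : realType) (M : falgType R[i])
    (star : M -> M) (Delta : M -> tens2 M) (S : M -> M) (eps : M -> R[i]) :
  weak_kac star Delta S eps ->
  forall x : M,
    app_l (@theta R M) id (Delta x)
      = app_l (@theta R M) S (mul2 (Delta 1) (tens x 1))
  /\ app_l (@theta R M) S (mul2 (Delta 1) (tens x 1))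
      = app_l (@theta R M) (fun y => eps_s Delta S (S y)) (Delta x).
Proof.
move=> [_ [HDl HDm _ _ Hco] [HSl HS1 HSa _ [_ HSS HSD]] [_ _ _ [_ _ _ HA]]] x.
split.
  by apply: part1.
by apply: part2 => //; apply: theta_lin.
Qed.
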